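(* Let $a,w\in \mathcal{A}$. Then the following are equivalent: (1) $a$ has a $w$-weighted generalized core-EP inverse. (2) There exist $z,y\in \mathcal{A}$ such that $a=z+y$, $(wz)^*(wy)=ywz=0$, $z$ has a $w$-weighted core inverse, and $y\in \mathcal{A}_w^{qnil}$. (3) There exist $z,y\in \mathcal{A}$ such that $a=z+y$, $ywz=0$, $z$ has a $w$-weighted core inverse, and $y\in \mathcal{A}_w^{qnil}$. In this case, $a^{\mathrm{gcEP},w}=z^{\mathrm{core},w}$.
   Context: $\mathcal{A}$ is a complex Banach *-algebra with identity. An element $a$ has a $w$-weighted core inverse if there is $x\in\mathcal{A}$ with $a(wx)^2=x$, $(wawx)^*=wawx$, $xw(aw)^2=aw$; such $x$ is unique and denoted $a^{\mathrm{core},w}$. An element $a$ has a $w$-weighted generalized core-EP inverse if there is $x\in\mathcal{A}$ with $a(wx)^2=x$, $(wawx)^*=wawx$, $\lim_{n\to\infty}\|(aw)^n-(xw)(aw)^{n+1}\|^{1/n}=0$; such $x$ is unique and denoted $a^{\mathrm{gcEP},w}$. $\mathcal{A}_w^{qnil}=\{y\in\mathcal{A}: \lim_{n\to\infty}\|(yw)^n\|^{1/n}=0\}$. *)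

(* Defs.v *)
From HB Require Import structures.
From mathcomp Require Import all_boot all_order all_algebra.
From mathcomp Require Import all_classical all_reals all_analysis.
From mathcomp Require Import complex.
Set Implicit Arguments. Unset Strict Implicit. Unset Printing Implicit Defensive.
Import Order.TTheory GRing.Theory Num.Theory.
Import numFieldNormedType.Exports.
Local Open Scope ring_scope.
Local Open Scope classical_set_scope.

Record BStarAlg (R : realType) := {
  bs_car :> completeNormedModType R[i];
  bs_mul : bs_car -> bs_car -> bs_car;
  bs_one : bs_car;
  bs_star : bs_car -> bs_car;
  bs_mulA : forall x y z, bs_mul x (bs_mul y z) = bs_mul (bs_mul x y) z;
  bs_mul1l : forall x, bs_mul bs_one x = x;
  bs_mul1r : forall x, bs_mul x bs_one = x;
  bs_mulDl : forall x y z, bs_mul (x + y) z = bs_mul x z + bs_mul y z;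
  bs_mulDr : forall x y z, bs_mul x (y + z) = bs_mul x y + bs_mul x z;
  bs_mulZl : forall (c : R[i]) x y, bs_mul (c *: x) y = c *: bs_mul x y;
  bs_mulZr : forall (c : R[i]) x y, bs_mul x (c *: y) = c *: bs_mul x y;
  bs_norm_mul : forall x y, `|bs_mul x y| <= `|x| * `|y|;
  bs_starD : forall x y, bs_star (x + y) = bs_star x + bs_star y;
  bs_starZ : forall (c : R[i]) x, bs_star (c *: x) = (Num.conj c) *: bs_star x;
  bs_starM : forall x y, bs_star (bs_mul x y) = bs_mul (bs_star y) (bs_star x);
  bs_starK : forall x, bs_star (bs_star x) = x
}.

Notation "x ⋆ y" := (bs_mul x y) (at level 40, left associativity).
Notation "x ^#" := (bs_star x) (at level 2, format "x ^#").

Section Defs.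
Variables (R : realType) (A : BStarAlg R).

Fixpoint bpow (x : A) (n : nat) : A :=
  match n with O => bs_one A | S m => bpow x m ⋆ x end.

Definition rnorm (x : A) : R := complex.Re `|x|.

Definition root_lim0 (u : nat -> A) : Prop :=
  (fun n : nat => rnorm (u n) `^ (n%:R)^-1) @ \oo --> (0 : R).

Definition is_wcore (a w x : A) : Prop :=
  [/\ a ⋆ ((w ⋆ x) ⋆ (w ⋆ x)) = x,
      (w ⋆ a ⋆ w ⋆ x)^# = w ⋆ a ⋆ w ⋆ x
    & x ⋆ w ⋆ ((a ⋆ w) ⋆ (a ⋆ w)) = a ⋆ w].

Definition has_wcore (a w : A) : Prop := exists x, is_wcore a w x.

Definition is_wgcEP (a w x : A) : Prop :=
  [/\ a ⋆ ((w ⋆ x) ⋆ (w ⋆ x)) = x,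
      (w ⋆ a ⋆ w ⋆ x)^# = w ⋆ a ⋆ w ⋆ x
    & root_lim0 (fun n => bpow (a ⋆ w) n - (x ⋆ w) ⋆ bpow (a ⋆ w) n.+1)].

Definition has_wgcEP (a w : A) : Prop := exists x, is_wgcEP a w x.

Definition wqnil (w y : A) : Prop := root_lim0 (fun n => bpow (y ⋆ w) n).

End Defs.

(* Main.v *)
Require Import Defs.
From HB Require Import structures.
From mathcomp Require Import all_boot all_order all_algebra.
From mathcomp Require Import all_classical all_reals all_analysis.
From mathcomp Require Import complex.
Import Order.TTheory GRing.Theory Num.Theory.
Import numFieldNormedType.Exports.
Local Open Scope ring_scope.

From mathcomp Require Import ring.
Set Implicit Arguments. Unset Strict Implicit.
Local Open Scope complex_scope.
Local Open Scope ring_scope.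

Lemma bmul0l (R : realType) (A : BStarAlg R) (x : A) : bs_mul (0 : A) x = 0.
Proof. by apply/(addrI (bs_mul 0 x)); rewrite -bs_mulDl !addr0. Qed.
Lemma bmul0r (R : realType) (A : BStarAlg R) (x : A) : bs_mul x (0 : A) = 0.
Proof. by apply/(addrI (bs_mul x 0)); rewrite -bs_mulDr !addr0. Qed.
Lemma bmulNl (R : realType) (A : BStarAlg R) (x y : A) : (- x) ⋆ y = - (x ⋆ y).
Proof. by apply/(addrI (x ⋆ y)); rewrite -bs_mulDl !subrr bmul0l. Qed.
Lemma bmulNr (R : realType) (A : BStarAlg R) (x y : A) : x ⋆ (- y) = - (x ⋆ y).
Proof. by apply/(addrI (x ⋆ y)); rewrite -bs_mulDr !subrr bmul0r. Qed.
Lemma bmulBl (R : realType) (A : BStarAlg R) (x y z : A) : (x - y) ⋆ z = x ⋆ z - y ⋆ z.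
Proof. by rewrite bs_mulDl bmulNl. Qed.
Lemma bmulBr (R : realType) (A : BStarAlg R) (x y z : A) : z ⋆ (x - y) = z ⋆ x - z ⋆ y.
Proof. by rewrite bs_mulDr bmulNr. Qed.

Lemma rnorm_ge0 (R : realType) (A : BStarAlg R) (x : A) : 0 <= rnorm x.
Proof. by have := normr_ge0 x; rewrite lecE /= => /andP[_]. Qed.
Lemma normE (R : realType) (A : BStarAlg R) (x : A) : `|x| = (rnorm x)%:C.
Proof. by rewrite /rnorm RRe_real // ger0_real. Qed.
Lemma rnorm_mul (R : realType) (A : BStarAlg R) (x y : A) :
  rnorm (x ⋆ y) <= rnorm x * rnorm y.
Proof.
have := bs_norm_mul x y; rewrite !normE lecE /= => /andP[_].
by rewrite !mul0r subr0.
Qed.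
Lemma rnorm_eq0 (R : realType) (A : BStarAlg R) (x : A) : rnorm x = 0 -> x = 0.
Proof. by move=> h; apply/normr0_eq0; rewrite normE h. Qed.

Lemma bpowSl (R : realType) (A : BStarAlg R) (g : A) n :
  bpow g n.+1 = g ⋆ bpow g n.
Proof.
elim: n => [|n IH]; first by rewrite /= bs_mul1l bs_mul1r.
change (bpow g n.+1 ⋆ g = g ⋆ bpow g n.+1).
by rewrite [in LHS]IH /= bs_mulA.
Qed.

Lemma rnorm_bpow (R : realType) (A : BStarAlg R) (g : A) n :
  rnorm (bpow g n) <= rnorm (bs_one A) * rnorm g ^+ n.
Proof.
elim: n => [|n IH]; first by rewrite expr0 mulr1.
change (bpow g n.+1) with (bpow g n ⋆ g).
apply: le_trans; first exact: rnorm_mul.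
rewrite exprSr mulrA; apply: ler_wpM2r => //; exact: rnorm_ge0.
Qed.

Lemma powR_small (R : realType) (c r : R) : 0 <= c -> 0 <= r <= 1 -> c `^ r <= c + 1.
Proof.
move=> c0 /andP[r0 r1].
case: (leP c 1) => c1.
  apply: (@le_trans _ _ 1); last by rewrite lerDr.
  have := ge0_ler_powR r0 _ _ c1; rewrite powR1; apply => //.
  by rewrite nnegrE.
apply: (@le_trans _ _ c); last by rewrite lerDl.
by apply: ler1_powR => //; apply: ltW.
Qed.

Lemma root_lim0_dom (R : realType) (A : BStarAlg R) (M : A) (u v : nat -> A) :
  root_lim0 v -> (forall n, u n.+1 = M ⋆ v n.+1) -> root_lim0 u.
Proof.
rewrite /root_lim0 => hv huv.
set K := rnorm M + 1.
apply: (@squeeze_cvgr _ _ _ _ (fun=> 0) (fun n => K * (rnorm (v n) `^ (n%:R)^-1))).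
- exists 1%N => // n /= n0.
  rewrite powR_ge0 /=.
  have r0 : 0 <= (n%:R : R)^-1 by rewrite invr_ge0.
  have r1 : (n%:R : R)^-1 <= 1 by rewrite invf_le1 ?ltr0n ?ler1n.
  case: n n0 r0 r1 => [//|n] _ r0 r1.
  rewrite huv.
  have h1 := @ge0_ler_powR R _ r0 _ _ (rnorm_ge0 (M ⋆ v n.+1))
     (mulr_ge0 (rnorm_ge0 M) (rnorm_ge0 (v n.+1))) (rnorm_mul M (v n.+1)).
  apply: le_trans h1 _.
  rewrite powRM ?rnorm_ge0 //; apply: ler_wpM2r; first exact: powR_ge0.
  by apply: powR_small; [exact: rnorm_ge0 | rewrite r0 r1].
- exact: cvg_cst.
- rewrite -(mulr0 K); apply: cvgM => //; exact: cvg_cst.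
Qed.

Lemma root_lim0_kill (R : realType) (A : BStarAlg R) (D : nat -> A) (v g h : A) :
  root_lim0 D -> (forall n, v = D n.+1 ⋆ (bpow g n ⋆ h)) -> v = 0.
Proof.
move=> hD hv; apply: rnorm_eq0; apply/eqP; rewrite eq_le rnorm_ge0 andbT.
set K := rnorm g + 1; set C := rnorm (bs_one A) * rnorm h.
have K0 : 0 < K by rewrite /K ltr_wpDl ?rnorm_ge0.
set e : R := 2^-1 / K.
have e0 : 0 < e by rewrite /e divr_gt0 // invr_gt0 ltr0n.
have eK : e * K = 2^-1 by rewrite /e divfK // gt_eqF.
clearbody e.
have [N _ hN] := cvgr_le _ hD _ e0.
have h2 : `|(2^-1 : R)| < 1.
  by rewrite ger0_norm ?invr_ge0 ?ler0n // invf_lt1 ?ltr0n // ltr1n.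
apply: (cvgr_to_ge (cvg_geometric (e * C) h2)).
exists N => // n /= Nn.
have hDn : rnorm (D n.+1) <= e ^+ n.+1.
  have := hN n.+1 (leqW Nn) => /= hle.
  have key : (rnorm (D n.+1) `^ (n.+1%:R)^-1) ^+ n.+1 = rnorm (D n.+1).
    rewrite -powR_mulrn ?powR_ge0 // -powRrM mulVf ?pnatr_eq0 // powRr1 //.
    exact: rnorm_ge0.
  rewrite -key; apply: lerXn2r hle; rewrite nnegrE ?powR_ge0 //; exact: ltW.
rewrite (hv n).
have hm : rnorm (bpow g n ⋆ h) <= rnorm (bs_one A) * K ^+ n * rnorm h.
  apply: le_trans; first exact: rnorm_mul.
  apply: ler_wpM2r; first exact: rnorm_ge0.
  apply: le_trans; first exact: rnorm_bpow.
  apply: ler_wpM2l; first exact: rnorm_ge0.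
  apply: lerXn2r; rewrite ?nnegrE ?rnorm_ge0 ?(ltW K0) //.
  by rewrite /K lerDl.
apply: le_trans; first exact: rnorm_mul.
apply: le_trans.
  by apply: (ler_pM _ _ hDn hm); exact: rnorm_ge0.
have E : e ^+ n.+1 * (rnorm (bs_one A) * K ^+ n * rnorm h) = e * C * (2^-1) ^+ n.
  by rewrite -eK exprMn exprS /C; ring.
by rewrite E.
Qed.

Ltac ctxby H := let p := fresh "p" in
  let H' := fresh "H" in
  move=> p; have H' := H; rewrite -?bs_mulA; congr (bs_mul p _);
  rewrite ?bs_mulA in H' *; exact H'.

Lemma Q_lem (R : realType) (A : BStarAlg R) (a w x : A) :
  a⋆w⋆x⋆w⋆x = x -> forall n,
  a⋆w⋆x⋆w⋆(bpow (x⋆w) n ⋆ x) = bpow (x⋆w) n ⋆ x.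
Proof.
move=> h [|n]; first by rewrite /= !bs_mul1l.
by rewrite bpowSl !bs_mulA h.
Qed.

Lemma P_lem (R : realType) (A : BStarAlg R) (a w x : A) :
  a⋆w⋆x⋆w⋆x = x -> forall n,
  bpow (a⋆w) n ⋆ (bpow (x⋆w) n ⋆ x) = x.
Proof.
move=> h; elim=> [|n IH]; first by rewrite /= !bs_mul1l.
have Qc : forall p : A, p ⋆ a⋆w⋆x⋆w⋆bpow (x⋆w) n ⋆ x = p ⋆ bpow (x⋆w) n ⋆ x.
  by ctxby (Q_lem h n).
change (bpow (a⋆w) n.+1) with (bpow (a⋆w) n ⋆ (a⋆w)).
by rewrite bpowSl !bs_mulA Qc -bs_mulA.
Qed.

Lemma P2_lem (R : realType) (A : BStarAlg R) (a w x : A) :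
  a⋆w⋆x⋆w⋆x = x -> forall n,
  bpow (a⋆w) n.+1 ⋆ (bpow (x⋆w) n ⋆ x) = a⋆w⋆x.
Proof.
move=> h n; rewrite bpowSl -bs_mulA P_lem //.
Qed.

Definition Dseq (R : realType) (A : BStarAlg R) (a w x : A) :=
  fun n => bpow (a ⋆ w) n - (x ⋆ w) ⋆ bpow (a ⋆ w) n.+1.

Lemma L_lem (R : realType) (A : BStarAlg R) (a w x1 x2 : A) :
  root_lim0 (Dseq a w x1) -> a⋆w⋆x2⋆w⋆x2 = x2 ->
  x2 = x1⋆w⋆a⋆w⋆x2.
Proof.
move=> hD h2; apply/eqP; rewrite -subr_eq0; apply/eqP.
apply: (root_lim0_kill (g := x2 ⋆ w) (h := x2 ⋆ w ⋆ x2) hD) => n.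
rewrite /Dseq bmulBl.
have -> : bpow (x2 ⋆ w) n ⋆ (x2 ⋆ w ⋆ x2) = bpow (x2 ⋆ w) n.+1 ⋆ x2.
  by rewrite /= !bs_mulA.
rewrite (bpowSl (a ⋆ w) n.+1).
move: (P_lem h2 n.+1); move: (bpow (a⋆w) n.+1) (bpow (x2⋆w) n.+1) => B T E.
by rewrite E -!bs_mulA E.
Qed.

Lemma K_lem (R : realType) (A : BStarAlg R) (a w x : A) :
  root_lim0 (Dseq a w x) -> a⋆w⋆x⋆w⋆x = x ->
  a⋆w⋆x = x⋆w⋆a⋆w⋆a⋆w⋆x.
Proof.
move=> hD h; apply/eqP; rewrite -subr_eq0; apply/eqP.
apply: (root_lim0_kill (g := x ⋆ w) (h := x) hD) => n.
rewrite /Dseq bmulBl (bpowSl (a ⋆ w) n.+1).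
move: (P2_lem h n); move: (bpow (a⋆w) n.+1) (bpow (x⋆w) n) => B T E.
by rewrite E -!bs_mulA E !bs_mulA.
Qed.

Lemma uniq_gcEP (R : realType) (A : BStarAlg R) (a w x1 x2 : A) :
  is_wgcEP a w x1 -> is_wgcEP a w x2 -> x1 = x2.
Proof.
case=> e1 s1 d1 [e2 s2 d2].
have e1' : a⋆w⋆x1⋆w⋆x1 = x1 by rewrite -[RHS]e1 !bs_mulA.
have e2' : a⋆w⋆x2⋆w⋆x2 = x2 by rewrite -[RHS]e2 !bs_mulA.
have L12 := L_lem d1 e2'.
have L21 := L_lem d2 e1'.
have L11 := L_lem d1 e1'.
have C12 : forall p : A, p⋆x1⋆w⋆a⋆w⋆x2 = p⋆x2 by ctxby (esym L12).
have C21 : forall p : A, p⋆x2⋆w⋆a⋆w⋆x1 = p⋆x1 by ctxby (esym L21).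
have C11 : forall p : A, p⋆x1⋆w⋆a⋆w⋆x1 = p⋆x1 by ctxby (esym L11).
have P12 : (w⋆a⋆w⋆x1) ⋆ (w⋆a⋆w⋆x2) = w⋆a⋆w⋆x2 by rewrite !bs_mulA C12.
have P21 : (w⋆a⋆w⋆x2) ⋆ (w⋆a⋆w⋆x1) = w⋆a⋆w⋆x1 by rewrite !bs_mulA C21.
have PP : w⋆a⋆w⋆x2 = w⋆a⋆w⋆x1.
  by rewrite -s2 -P12 bs_starM s1 s2 P21.
have wx : w ⋆ x2 = w ⋆ x1.
  have : w ⋆ x2 = w ⋆ x1 ⋆ (w⋆a⋆w⋆x2) by rewrite [in LHS]L12 !bs_mulA.
  by rewrite PP !bs_mulA C11.
by rewrite -e1 -e2 wx.
Qed.

Lemma decomp_pow (R : realType) (A : BStarAlg R) (s q : A) :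
  q ⋆ s = 0 -> forall n, bpow (s+q) n.+1 = s ⋆ bpow (s+q) n + bpow q n.+1.
Proof.
move=> qs; elim=> [|n IH]; first by rewrite /= !bs_mul1l bs_mul1r.
change (bpow (s+q) n.+2) with (bpow (s+q) n.+1 ⋆ (s+q)).
change (bpow q n.+2) with (bpow q n.+1 ⋆ q).
rewrite [in LHS]IH.
change (bpow (s+q) n.+1) with (bpow (s+q) n ⋆ (s+q)).
change (bpow q n.+1) with (bpow q n ⋆ q).
move: (bpow (s+q) n) (bpow q n) => B Q.
rewrite bs_mulDl [X in _ + X]bs_mulDr -(bs_mulA Q q s) qs bmul0r add0r.
by rewrite bs_mulA.
Qed.

Lemma D_formula (R : realType) (A : BStarAlg R) (s q u : A) :
  q ⋆ s = 0 -> u ⋆ (s ⋆ s) = s -> forall n,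
  bpow (s+q) n - u ⋆ bpow (s+q) n.+1 = (bs_one A - u ⋆ (s+q)) ⋆ bpow q n.
Proof.
move=> qs uss n.
have key : bpow (s+q) n - u⋆s⋆bpow (s+q) n = bpow q n - u⋆s⋆bpow q n.
  case: n => [|m] //.
  rewrite decomp_pow //.
  move: (bpow (s+q) m) (bpow q m.+1) => B Q.
  rewrite bs_mulDr.
  have -> : u⋆s⋆(s⋆B) = s⋆B by rewrite bs_mulA -(bs_mulA u) uss.
  by rewrite opprD addrACA subrr add0r.
rewrite decomp_pow // bpowSl.
move: key; move: (bpow (s+q) n) (bpow q n) => B Q key.
rewrite bs_mulDr bmulBl bs_mul1l bs_mulDr bs_mulDl !bs_mulA.
by rewrite !opprD !addrA key.
Qed.

Lemma core_to_gcEP (R : realType) (A : BStarAlg R) (a w z y c : A) :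
  a = z + y -> y ⋆ w ⋆ z = 0 -> is_wcore z w c -> wqnil w y -> is_wgcEP a w c.
Proof.
move=> -> hyz [c1 c2 c3] hq.
have ywc : y ⋆ w ⋆ c = 0 by rewrite -c1 !bs_mulA hyz !bmul0l.
have wywc : w ⋆ y ⋆ w ⋆ c = 0 by rewrite -!bs_mulA (bs_mulA y) ywc bmul0r.
split.
- by rewrite bs_mulDl c1 !bs_mulA ywc !bmul0l addr0.
- by rewrite bs_mulDr !bs_mulDl wywc addr0.
- apply: (root_lim0_dom (M := bs_one A - (c ⋆ w) ⋆ ((z + y) ⋆ w)) hq) => n.
  have qs : (y ⋆ w) ⋆ (z ⋆ w) = 0 by rewrite bs_mulA hyz bmul0l.
  have uss : (c ⋆ w) ⋆ ((z ⋆ w) ⋆ (z ⋆ w)) = z ⋆ w := c3.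
  by rewrite bs_mulDl (D_formula qs uss).
Qed.

Lemma gcEP_to_decomp (R : realType) (A : BStarAlg R) (a w x : A) :
  is_wgcEP a w x ->
  [/\ (w ⋆ (a⋆w⋆x⋆w⋆a))^# ⋆ (w ⋆ (a - a⋆w⋆x⋆w⋆a)) = 0,
      (a - a⋆w⋆x⋆w⋆a) ⋆ w ⋆ (a⋆w⋆x⋆w⋆a) = 0,
      is_wcore (a⋆w⋆x⋆w⋆a) w x & wqnil w (a - a⋆w⋆x⋆w⋆a)].
Proof.
case=> e1 s d.
have e1' : a⋆w⋆x⋆w⋆x = x by rewrite -[RHS]e1 !bs_mulA.
have L11 := L_lem d e1'.
have K := K_lem d e1'.
have E1c : forall p : A, p⋆a⋆w⋆x⋆w⋆x = p⋆x by ctxby e1'.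
have L1c : forall p : A, p⋆x⋆w⋆a⋆w⋆x = p⋆x by ctxby (esym L11).
have Kc : forall p : A, p⋆x⋆w⋆a⋆w⋆a⋆w⋆x = p⋆a⋆w⋆x by ctxby (esym K).
split.
- have wz : w ⋆ (a⋆w⋆x⋆w⋆a) = (w⋆a⋆w⋆x) ⋆ (w⋆a) by rewrite !bs_mulA.
  rewrite wz bs_starM s -bs_mulA.
  have -> : w⋆a⋆w⋆x ⋆ (w ⋆ (a - a⋆w⋆x⋆w⋆a)) = 0.
    by rewrite !bmulBr !bs_mulA L1c subrr.
  by rewrite bmul0r.
- by rewrite !bmulBl !bs_mulA -(Kc (a⋆w)) subrr.
- split.
  + by rewrite !bs_mulA E1c e1'.
  + have hz : w⋆(a⋆w⋆x⋆w⋆a)⋆w⋆x = w⋆a⋆w⋆x by rewrite !bs_mulA L1c.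
    by rewrite hz s.
  + by rewrite !bs_mulA -L11 -K.
- set F := a⋆w⋆x⋆w.
  apply: (root_lim0_dom (M := bs_one A - F) d) => n.
  have hq : (a - a⋆w⋆x⋆w⋆a) ⋆ w = (bs_one A - F) ⋆ (a ⋆ w).
    by rewrite bmulBl bmulBl bs_mul1l /F !bs_mulA.
  have Ft : (bs_one A - F) ⋆ (x ⋆ w) = 0.
    by rewrite bmulBl bs_mul1l /F !bs_mulA e1' subrr.
  have bF : (bs_one A - F) ⋆ (a ⋆ w) ⋆ F = 0.
    by rewrite !bmulBl bs_mul1l /F !bs_mulA -(Kc (a⋆w)) subrr.
  have pw : forall m, bpow ((a - a⋆w⋆x⋆w⋆a) ⋆ w) m.+1 = (bs_one A - F) ⋆ bpow (a⋆w) m.+1.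
    elim=> [|m IH]; first by rewrite /= !bs_mul1l hq.
    rewrite bpowSl IH hq (bpowSl (a⋆w) m.+1).
    move: (bpow (a⋆w) m.+1) => B.
    by rewrite [LHS]bs_mulA bmulBr bs_mul1r bF subr0 -bs_mulA.
  rewrite pw; move: (bpow (a⋆w) n.+1) (bpow (a⋆w) n.+2) => B1 B2.
  by rewrite bmulBr (bs_mulA (bs_one A - F)) Ft bmul0l subr0.
Qed.


Unset Implicit Arguments. Set Strict Implicit.
Local Close Scope complex_scope.
Local Open Scope ring_scope.

Theorem theorem3p1 (R : realType) (A : BStarAlg R) (a w : A) :
  (has_wgcEP a w <->
     exists z y : A, [/\ a = z + y, (w ⋆ z)^# ⋆ (w ⋆ y) = 0,
                        y ⋆ w ⋆ z = 0, has_wcore z w & wqnil w y]) /\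
  (has_wgcEP a w <->
     exists z y : A, [/\ a = z + y, y ⋆ w ⋆ z = 0,
                        has_wcore z w & wqnil w y]) /\
  (forall x z y c : A,
     is_wgcEP a w x -> a = z + y -> y ⋆ w ⋆ z = 0 ->
     is_wcore z w c -> wqnil w y -> x = c).
Proof.
have fwd : forall x, is_wgcEP a w x ->
    exists z y : A, [/\ a = z + y, (w ⋆ z)^# ⋆ (w ⋆ y) = 0,
                        y ⋆ w ⋆ z = 0, has_wcore z w & wqnil w y].
  move=> x hx; have [h1 h2 h3 h4] := gcEP_to_decomp hx.
  exists (a⋆w⋆x⋆w⋆a), (a - a⋆w⋆x⋆w⋆a); split => //.
    by rewrite addrC subrK.
  by exists x.
split; [|split].
- split; first by case=> x /fwd.
  case=> z [y [hzy _ hyz [c hc] hq]].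
  by exists c; apply: (core_to_gcEP hzy hyz hc hq).
- split.
  + case=> x /fwd [z [y [h1 _ h3 h4 h5]]].
    by exists z, y.
  + case=> z [y [hzy hyz [c hc] hq]].
    by exists c; apply: (core_to_gcEP hzy hyz hc hq).
- move=> x z y c hx hzy hyz hc hq.
  exact: (uniq_gcEP hx (core_to_gcEP hzy hyz hc hq)).
Qed.
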